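(* Let $k$ be a field of characteristic $p>0$, $m,n\ge1$, and let $G=\ker(F^n:W_m\to W_m)$, with Hopf algebra $R=k[x_0,\dots,x_{m-1}]/(x_0^{p^n},\dots,x_{m-1}^{p^n})$. For $0\le i\le m$ let $G_i\subseteq G$ be the closed subgroup scheme defined by the ideal $(x_0,\dots,x_{m-i-1})$ (so $G_0=0$, $G_m=G$; $G_i$ is the image of $\ker(F^n:W_i\to W_i)$ under $V^{m-i}$). Let $M$ be a finite-dimensional $R$-comodule with comodule map $c_M$, let $1\le i\le m$, and let $v_{i-1}\in M^{G_{i-1}}\setminus\{0\}$. Let $R_i\subseteq R$ be the subalgebra generated by $x_0,\dots,x_{m-i}$. Then: (1) $c_M(v_{i-1})\in M\otimes R_i$; (2) expand $c_M(v_{i-1})$ in the monomial basis of $R_i$ and let $v_i\otimes x_{m-i}^j$ be the nonzero term whose monomial involves only $x_{m-i}$ (including the constant monomial $x_{m-i}^0$) with $j$ maximal. Then $v_i\in M^{G_i}\setminus\{0\}$.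
   Context: $W_m$ denotes truncated Witt vectors of length $m$ over $k$, $F$ the relative Frobenius $(a_\nu)\mapsto(a_\nu^p)$, $V$ the Verschiebung $(a_0,\dots,a_{m-1})\mapsto(0,a_0,\dots,a_{m-2})$. The comultiplication of $R$ is given by Witt vector addition. An $R$-comodule is a $k$-vector space $M$ with $c_M:M\to M\otimes_kR$ satisfying coassociativity and the counit axiom (equivalently a representation of $G$); for a closed subgroup $H\subseteq G$ with Hopf algebra $R/I$, $M^H=\{w\in M:(\mathrm{id}\otimes\mathrm{pr})c_M(w)=w\otimes1\in M\otimes R/I\}$. *)

(* Defs.v *)
From HB Require Import structures.
From mathcomp Require Import all_boot all_order all_algebra.
From mathcomp Require Import mpoly.
Set Implicit Arguments. Unset Strict Implicit. Unset Printing Implicit Defensive.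
Import Order.TTheory GRing.Theory Num.Theory.
Local Open Scope ring_scope.

(* Reduction modulo the monomial ideal (x_0^N, ..., x_{nv-1}^N): keep the
   monomials all of whose exponents are < N.  A polynomial q with
   [trunc N q = q] is the canonical representative of its class. *)
Definition trunc (R : ringType) (nv N : nat) (q : {mpoly R[nv]}) : {mpoly R[nv]} :=
  \sum_(mu <- msupp q | [forall t : 'I_nv, (mu t < N)%N]) q@_mu *: 'X_[mu].

Definition divz_mpoly (nv : nat) (d : int) (q : {mpoly int[nv]}) : {mpoly int[nv]} :=
  \sum_(mu <- msupp q) ((q@_mu %/ d)%Z) *: 'X_[mu].

Definition int_to (R : ringType) (nv : nat) (q : {mpoly int[nv]}) : {mpoly R[nv]} :=
  mmap (fun z : int => (z%:~R : R)%:MP) (fun t => 'X_t) q.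

(* Witt vector addition polynomials S_j(x,y) in Z[x_0..x_{m-1},y_0..y_{m-1}]
   (x_t = 'X_(lshift m t), y_t = 'X_(rshift m t)), characterized by the ghost
   identities  sum_{i<=j} p^i S_i^{p^{j-i}} = w_j(x) + w_j(y)
   with w_j(x) = sum_{i<=j} p^i x_i^{p^{j-i}}.                          *)

Section Witt.
Variables (p m : nat).

Definition wx (t : 'I_m) : {mpoly int[m + m]} := 'X_(lshift m t).
Definition wy (t : 'I_m) : {mpoly int[m + m]} := 'X_(rshift m t).

Definition ghost (X : 'I_m -> {mpoly int[m + m]}) (j : nat) : {mpoly int[m + m]} :=
  \sum_(t < m | (t <= j)%N) (p ^ t)%:R * (X t) ^+ (p ^ (j - t)).

Fixpoint witt_add_seq (j : nat) : seq {mpoly int[m + m]} :=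
  match j with
  | 0 => [::]
  | j'.+1 =>
      let l := witt_add_seq j' in
      rcons l (divz_mpoly (p ^ j')%:Z
        (ghost wx j' + ghost wy j'
         - \sum_(i < j') (p ^ i)%:R * (l`_i) ^+ (p ^ (j' - i))))
  end.

Definition witt_add (t : 'I_m) : {mpoly int[m + m]} := (witt_add_seq m)`_t.

End Witt.

(* The Hopf algebra R = k[x_0..x_{m-1}]/(x_i^{p^n}) of G = ker(F^n : W_m -> W_m),
   elements represented by truncated polynomials (trunc (p^n) q = q);
   R (x) R = k[x_0..x_{m-1}, y_0..y_{m-1}]/(x_i^{p^n}, y_i^{p^n}).        *)

Section Hopf.
Variables (k : fieldType) (p n m : nat).

(* comultiplication (on representatives): x_t |-> S_t(x (x) 1, 1 (x) x) *)
Definition Delta (q : {mpoly k[m]}) : {mpoly k[m + m]} :=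
  q \mPo [tuple int_to k (witt_add p t) | t < m].

(* q (x) 1  and  1 (x) q  in R (x) R *)
Definition inl_mp (q : {mpoly k[m]}) : {mpoly k[m + m]} :=
  q \mPo [tuple 'X_(lshift m t) | t < m].
Definition inr_mp (q : {mpoly k[m]}) : {mpoly k[m + m]} :=
  q \mPo [tuple 'X_(rshift m t) | t < m].

Definition counit (q : {mpoly k[m]}) : k := q.@[fun _ => 0].

(* A finite-dimensional R-comodule M = k^d is given by a d x d matrix C over R:
   c_M(e_a) = sum_b e_b (x) C a b, i.e. c_M(v) = v *m C (M (x) R = R^d).   *)
Definition coaction (d : nat) (C : 'M[{mpoly k[m]}]_d) (v : 'rV[k]_d)
  : 'rV[{mpoly k[m]}]_d := map_mx (fun a => a%:MP) v *m C.

Definition is_comodule (d : nat) (C : 'M[{mpoly k[m]}]_d) : Prop :=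
  [/\ (* entries are elements of R (reduced representatives) *)
      forall a b, trunc (p ^ n) (C a b) = C a b,
      (* counit axiom: (id (x) eps) o c_M = id *)
      forall a b, counit (C a b) = (a == b)%:R &
      (* coassociativity: (id (x) Delta) o c_M = (c_M (x) id) o c_M *)
      forall a b, trunc (p ^ n) (Delta (C a b))
                  = trunc (p ^ n) (\sum_c inl_mp (C c b) * inr_mp (C a c))].

(* projection R -> R/I_i with I_i = (x_0, ..., x_{m-i-1}) (Hopf algebra of G_i),
   on representatives: kill the variables x_0 .. x_{m-i-1}. *)
Definition proj_G (i : nat) (q : {mpoly k[m]}) : {mpoly k[m]} :=
  q \mPo [tuple (if (t < m - i)%N then 0 else 'X_t) | t < m].

(* w \in M^{G_i} :  (id (x) pr) c_M(w) = w (x) 1  in M (x) R/I_i *)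
Definition fixed_by (d : nat) (C : 'M[{mpoly k[m]}]_d) (i : nat) (w : 'rV[k]_d) : Prop :=
  forall b, trunc (p ^ n) (proj_G i (coaction C w 0 b)) = (w 0 b)%:MP.

(* R_i-membership: polynomial in x_0, ..., x_{r} only (here r = m - i). *)
Definition in_sub_vars (r : nat) (q : {mpoly k[m]}) : Prop :=
  q \mPo [tuple (if (t <= r)%N then 'X_t else 0) | t < m] = q.

Definition mono_pow (nu j : nat) : 'X_{1..m} :=
  [multinom (if val t == nu then j else 0) | t < m].

Definition coef_row (d : nat) (C : 'M[{mpoly k[m]}]_d) (v : 'rV[k]_d) (mu : 'X_{1..m})
  : 'rV[k]_d := \row_b (coaction C v 0 b)@_mu.

End Hopf.

(* Main.v *)
Require Import Defs.
From HB Require Import structures.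
From mathcomp Require Import all_boot all_order all_algebra.
From mathcomp Require Import mpoly.
Import Order.TTheory GRing.Theory Num.Theory.
Local Open Scope ring_scope.

Module Helpers.
Set Implicit Arguments. Unset Strict Implicit. Unset Printing Implicit Defensive.

Section Gen.
Variable R : comRingType.

Lemma mcoeff_sum_msupp n (q : {mpoly R[n]}) mu :
  q@_mu = \sum_(m0 <- msupp q) q@_m0 * (m0 == mu)%:R.
Proof.
rewrite {1}[q]mpolyE raddf_sum /=; apply: eq_bigr => m0 _.
by rewrite mcoeffZ mcoeffX.
Qed.

Definition bnd n N (mu : 'X_{1..n}) := [forall t : 'I_n, (mu t < N)%N].

Lemma mcoeff_trunc n N (q : {mpoly R[n]}) mu :
  (trunc N q)@_mu = if bnd N mu then q@_mu else 0.
Proof.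
rewrite /trunc raddf_sum /= (mcoeff_sum_msupp q mu) big_mkcond /=.
case: ifP => hb.
  apply: eq_bigr => m0 _; rewrite mcoeffZ mcoeffX.
  case: ifP => hm; first by [].
  case: eqP => e; last by rewrite mulr0.
  by move: hm; rewrite /bnd e -/(bnd N mu) hb.
rewrite big1 // => m0 _; case: ifP => // hm; rewrite mcoeffZ mcoeffX.
case: eqP => [e|]; last by rewrite mulr0.
by move: hb; rewrite -e /bnd hm.
Qed.

End Gen.


Section Ren.
Variable R : comRingType.
Variables (n k : nat) (P : pred 'I_n) (g : 'I_n -> 'I_k).

Definition ren_tuple : n.-tuple {mpoly R[k]} :=
  [tuple (if P t then 'X_(g t) else 0) | t < n].
Definition push (m : 'X_{1..n}) : 'X_{1..k} := (\sum_(t < n) U_(g t) *+ m t)%MM.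
Definition psupp (m : 'X_{1..n}) := [forall t, (m t != 0%N) ==> P t].

Lemma compX_ren m : 'X_[m] \mPo ren_tuple = if psupp m then 'X_[push m] else 0.
Proof.
rewrite comp_mpolyX; case: ifP => hs.
  rewrite /push -mprodXnE; apply: eq_bigr => t _.
  rewrite tnth_map tnth_ord_tuple; case: ifP => // hP.
  move/forallP: hs => /(_ t); rewrite hP implybF negbK => /eqP ->.
  by rewrite !expr0.
move/negbT: hs; rewrite negb_forall => /existsP [t]; rewrite negb_imply => /andP [ht hP].
rewrite (bigD1 t) //= tnth_map tnth_ord_tuple (negbTE hP) expr0n.
by rewrite (negbTE ht) mul0r.
Qed.

End Ren.

Section Ren2.
Variable R : comRingType.
Variables (n k : nat) (P : pred 'I_n) (g : 'I_n -> 'I_k).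
Hypothesis ginj : {in P &, injective g}.

Definition pull (mu : 'X_{1..k}) : 'X_{1..n} :=
  [multinom (if P t then mu (g t) else 0%N) | t < n].
Definition imsupp (mu : 'X_{1..k}) :=
  [forall j, (mu j != 0%N) ==> [exists t, P t && (g t == j)]].

Lemma pushE m j : push g m j = (\sum_(t < n) ((g t == j) * m t))%N.
Proof.
rewrite /push mnm_sumE; apply: eq_bigr => t _.
by rewrite mulmnE mnm1E mulnC.
Qed.

Lemma psupp_pull mu : psupp P (pull mu).
Proof.
apply/forallP => t; apply/implyP; rewrite mnmE; by case: (P t); rewrite ?eqxx.
Qed.

Lemma pull_push m : psupp P m -> pull (push g m) = m.
Proof.
move=> hs; apply/mnmP => t; rewrite mnmE.
case: ifP => hP; last first.
  by move/forallP: hs => /(_ t); rewrite hP implybF negbK => /eqP ->.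
rewrite pushE (bigD1 t) //= eqxx mul1n big1 ?addn0 // => s hst.
case: eqP => [e|]; last by rewrite mul0n.
case: (eqVneq (m s) 0%N) => [->|hm]; first by rewrite muln0.
have hPs : P s by move/forallP: hs => /(_ s); rewrite hm.
by move: hst; rewrite (ginj hPs hP e) eqxx.
Qed.

Lemma imsupp_push m : psupp P m -> imsupp (push g m).
Proof.
move=> hs; apply/forallP => j; apply/implyP; rewrite pushE => h.
move: h; rewrite sum_nat_eq0 negb_forall => /existsP [t].
rewrite /= muln_eq0 negb_or => /andP [hg hm].
apply/existsP; exists t; rewrite eqb0 negbK in hg; rewrite hg andbT.
by move/forallP: hs => /(_ t); rewrite hm.
Qed.

Lemma push_pull mu : imsupp mu -> push g (pull mu) = mu.
Proof.
move=> hi; apply/mnmP => j; rewrite pushE.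
case: (eqVneq (mu j) 0%N) => hj.
  rewrite hj big1 // => t _; rewrite mnmE; case: eqP => [e|]; last by rewrite mul0n.
  by case: ifP => _; rewrite ?e ?hj muln0.
move/forallP: hi => /(_ j); rewrite hj /= => /existsP [t0 /andP [hP0 /eqP e0]].
rewrite (bigD1 t0) //= e0 eqxx mul1n mnmE hP0 e0 big1 ?addn0 // => t ht.
case: eqP => [e|]; last by rewrite mul0n.
rewrite mnmE; case: ifP => hP; last by rewrite muln0.
by move: ht; rewrite (ginj hP hP0 (etrans e (esym e0))) eqxx.
Qed.

Lemma push_eqE m mu : psupp P m ->
  (push g m == mu) = imsupp mu && (m == pull mu).
Proof.
move=> hs; apply/eqP/andP => [<-|[hi /eqP ->]]; last exact: push_pull.
by rewrite pull_push // imsupp_push.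
Qed.

Lemma mcoeff_ren (q : {mpoly R[n]}) mu :
  (q \mPo ren_tuple R P g)@_mu = if imsupp mu then q@_(pull mu) else 0.
Proof.
rewrite comp_mpolyEX raddf_sum /=.
under eq_bigr => m0 _ do rewrite mcoeffZ compX_ren.
case: ifP => hi.
  rewrite (mcoeff_sum_msupp q (pull mu)); apply: eq_bigr => m0 _.
  case: ifP => hs; first by rewrite mcoeffX push_eqE // hi.
  rewrite mcoeff0; case: eqP => [e|]; last by rewrite mulr0.
  by move: hs; rewrite e psupp_pull.
rewrite big1 // => m0 _; case: ifP => hs; last by rewrite mcoeff0 mulr0.
by rewrite mcoeffX push_eqE // hi mulr0.
Qed.

End Ren2.


Section Comp.
Variable R : comRingType.

Lemma comp_mpolyA n k l (q : {mpoly R[n]}) (lq : n.-tuple {mpoly R[k]})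
  (lr : k.-tuple {mpoly R[l]}) :
  (q \mPo lq) \mPo lr = q \mPo [tuple (tnth lq t \mPo lr) | t < n].
Proof.
rewrite [q \mPo lq]comp_mpolyE [RHS]comp_mpolyE raddf_sum /=.
apply: eq_bigr => m0 _; rewrite comp_mpolyZ rmorph_prod /=; congr (_ *: _).
by apply: eq_bigr => t _; rewrite rmorphXn /= tnth_map tnth_ord_tuple.
Qed.

Lemma truncD n N (q1 q2 : {mpoly R[n]}) : trunc N (q1 + q2) = trunc N q1 + trunc N q2.
Proof. by apply/mpolyP => mu; rewrite mcoeffD !mcoeff_trunc mcoeffD; case: ifP; rewrite ?addr0. Qed.

Lemma truncZ n N c (q : {mpoly R[n]}) : trunc N (c *: q) = c *: trunc N q.
Proof. by apply/mpolyP => mu; rewrite mcoeffZ !mcoeff_trunc mcoeffZ; case: ifP; rewrite ?mulr0. Qed.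

Lemma trunc0 n N : trunc N (0 : {mpoly R[n]}) = 0.
Proof. by apply/mpolyP => mu; rewrite mcoeff_trunc mcoeff0; case: ifP. Qed.

Lemma trunc_sum n N I (r : seq I) (F : I -> {mpoly R[n]}) :
  trunc N (\sum_(i <- r) F i) = \sum_(i <- r) trunc N (F i).
Proof.
elim: r => [|a r ih]; first by rewrite !big_nil trunc0.
by rewrite !big_cons truncD ih.
Qed.

Lemma trunc_id n N (q : {mpoly R[n]}) : trunc N (trunc N q) = trunc N q.
Proof. by apply/mpolyP => mu; rewrite !mcoeff_trunc; case: (bnd N mu). Qed.

Lemma trunc_ren n k N (P : pred 'I_n) (g : 'I_n -> 'I_k) (q : {mpoly R[n]}) :
  {in P &, injective g} -> (0 < N)%N ->
  trunc N (q \mPo ren_tuple R P g) = (trunc N q) \mPo ren_tuple R P g.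
Proof.
move=> ginj hN; apply/mpolyP => mu.
rewrite mcoeff_trunc !mcoeff_ren // mcoeff_trunc.
case: (boolP (imsupp P g mu)) => hi; last by case: ifP.
have -> : bnd N mu = bnd N (pull P g mu); last by [].
apply/forallP/forallP => h t.
  by rewrite mnmE; case: ifP.
case: (eqVneq (mu t) 0%N) => [->//|ht].
move/forallP: hi => /(_ t); rewrite ht /= => /existsP [s /andP [hP /eqP e]].
by have := h s; rewrite mnmE hP e.
Qed.

End Comp.


Lemma sum_seq_pick (T : eqType) (V : zmodType) (r : seq T) (F : T -> V) mu :
  uniq r -> \sum_(m0 <- r) (if m0 == mu then F m0 else 0) = if mu \in r then F mu else 0.
Proof.
elim: r => [|a r ih]; first by rewrite big_nil.
rewrite big_cons /= inE => /andP [ha hu]; rewrite ih //.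
case: (eqVneq a mu) => [<-|hne]; last by rewrite add0r; case: ifP => // hm; rewrite (negbTE hne).
by rewrite (negbTE ha) addr0.
Qed.

Lemma mcoeff_mapc (R : ringType) n (q : {mpoly R[n]}) (f : R -> R) mu :
  f 0 = 0 ->
  (\sum_(m0 <- msupp q) f q@_m0 *: 'X_[m0])@_mu = f q@_mu.
Proof.
move=> f0; rewrite raddf_sum /=.
under eq_bigr => m0 _ do rewrite mcoeffZ mcoeffX.
rewrite (eq_bigr (fun m0 => if m0 == mu then f q@_m0 else 0)); last first.
  by move=> m0 _; case: eqP; rewrite ?mulr1 ?mulr0.
rewrite sum_seq_pick ?msupp_uniq //; case: ifP => // h.
by rewrite memN_msupp_eq0 ?h.
Qed.

Lemma mcoeff_divz n d (q : {mpoly int[n]}) mu : (divz_mpoly d q)@_mu = (q@_mu %/ d)%Z.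
Proof. by rewrite /divz_mpoly (@mcoeff_mapc _ _ q (fun c => (c %/ d)%Z)) // div0z. Qed.

Lemma mcoeff_int_to (R : ringType) n (q : {mpoly int[n]}) mu :
  (int_to R q)@_mu = (q@_mu)%:~R.
Proof.
rewrite /int_to /mmap raddf_sum /=.
under eq_bigr => m0 _ do rewrite mmap1_id mul_mpolyC mcoeffZ mcoeffX.
rewrite (eq_bigr (fun m0 => if m0 == mu then (q@_m0)%:~R else 0 : R)); last first.
  by move=> m0 _; case: eqP; rewrite ?mulr1 ?mulr0.
rewrite sum_seq_pick ?msupp_uniq //; case: ifP => // h.
by rewrite memN_msupp_eq0 ?h.
Qed.

Section Proj.
Variable R : comRingType.
Variables (n : nat) (P : pred 'I_n).

Definition projt := ren_tuple R P id.

Lemma mcoeff_proj (q : {mpoly R[n]}) mu :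
  (q \mPo projt)@_mu = if psupp P mu then q@_mu else 0.
Proof.
rewrite mcoeff_ren; last by move=> ? ? ? ? /=.
have -> : imsupp P id mu = psupp P mu.
  apply/forallP/forallP => h t; move: (h t); case: (mu t != 0%N) => //=.
    by case/existsP => s /andP [hP /eqP <-].
  by move=> hP; apply/existsP; exists t; rewrite hP eqxx.
case: ifP => // hs; congr (q@_ _); apply/mnmP => t; rewrite mnmE.
case: ifP => // hP; move/forallP: hs => /(_ t); rewrite hP implybF negbK => /eqP ->.
by [].
Qed.
End Proj.


Section W.
Variables (p m : nat).

Definition T (j : nat) := (witt_add_seq p m j.+1)`_j.

Lemma size_was j : size (witt_add_seq p m j) = j.
Proof. by elim: j => //= j ih; rewrite size_rcons ih. Qed.

Lemma was_nth M i : (i < M)%N -> (witt_add_seq p m M)`_i = T i.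
Proof.
elim: M => // M ih; rewrite ltnS leq_eqVlt => /orP [/eqP ->|hi].
  by [].
by rewrite /= nth_rcons size_was hi ih.
Qed.

Lemma T_eq j : T j = divz_mpoly (p ^ j)%:Z
  (ghost p (@wx m) j + ghost p (@wy m) j
   - \sum_(i < j) (p ^ i)%:R * (T i) ^+ (p ^ (j - i))).
Proof.
rewrite /T /= nth_rcons size_was ltnn eqxx; congr divz_mpoly; congr (_ - _).
by apply: eq_bigr => i _; rewrite was_nth.
Qed.

Lemma witt_addE (t : 'I_m) : witt_add p t = T t.
Proof. by rewrite /witt_add was_nth. Qed.

End W.


Lemma projX (R : comRingType) n (P : pred 'I_n) u :
  ('X_u : {mpoly R[n]}) \mPo projt R P = if P u then 'X_u else 0.
Proof. by rewrite comp_mpolyXU -tnth_nth tnth_map tnth_ord_tuple. Qed.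

Lemma divz_proj n (P : pred 'I_n) d (q : {mpoly int[n]}) :
  divz_mpoly d q \mPo projt int P = divz_mpoly d (q \mPo projt int P).
Proof.
apply/mpolyP => mu; rewrite mcoeff_proj !mcoeff_divz mcoeff_proj.
by case: ifP => //; rewrite div0z.
Qed.

Lemma divz_exact n (d : nat) (q : {mpoly int[n]}) : (0 < d)%N ->
  divz_mpoly d%:Z (d%:R * q) = q.
Proof.
move=> hd; apply/mpolyP => mu; rewrite mcoeff_divz mulr_natl mcoeffMn -mulr_natr.
by rewrite natz mulzK // -lt0n.
Qed.

Lemma int_to_proj (R : comRingType) n (P : pred 'I_n) (q : {mpoly int[n]}) :
  int_to R q \mPo projt R P = int_to R (q \mPo projt int P).
Proof.
apply/mpolyP => mu; rewrite mcoeff_proj !mcoeff_int_to mcoeff_proj.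
by case: ifP.
Qed.

Lemma expr0p (R : ringType) p k : (0 < p)%N -> (0 : R) ^+ (p ^ k) = 0.
Proof. by move=> hp; rewrite expr0n expn_eq0 -[p == 0%N]negbK -lt0n hp. Qed.

Section WS.
Variables (p m : nat) (hp : (0 < p)%N).
Variable P : pred 'I_(m + m).
Local Notation sig q := (q \mPo projt int P).

Lemma T_sig j : sig (T p m j) = divz_mpoly (p ^ j)%:Z
  (sig (ghost p (@wx m) j) + sig (ghost p (@wy m) j)
   - \sum_(i < j) (p ^ i)%:R * (sig (T p m i)) ^+ (p ^ (j - i))).
Proof.
rewrite T_eq divz_proj rmorphB rmorphD /=; congr divz_mpoly; congr (_ - _).
rewrite rmorph_sum; apply: eq_bigr => i _; by rewrite rmorphM /= !rmorphXn /= rmorph_nat.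
Qed.

Lemma ghost_sig (X : 'I_m -> {mpoly int[m + m]}) (u : 'I_m -> 'I_(m + m)) j :
  (forall t, X t = 'X_(u t)) ->
  sig (ghost p X j) = \sum_(t < m | (t <= j)%N) (p ^ t)%:R *
      (if P (u t) then X t else 0) ^+ (p ^ (j - t)).
Proof.
move=> hX; rewrite /ghost rmorph_sum; apply: eq_bigr => t _.
by rewrite rmorphM /= !rmorphXn /= rmorph_nat hX projX.
Qed.

End WS.


Lemma divz0p n d : divz_mpoly d (0 : {mpoly int[n]}) = 0.
Proof. by apply/mpolyP => mu; rewrite mcoeff_divz mcoeff0 div0z. Qed.

Section W3.
Variables (p m r : nat) (hp : (0 < p)%N) (hr : (r < m)%N).
Definition P3 (u : 'I_(m + m)) := if (u < m)%N then (r <= u)%N else (u == m + r :> nat).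
Local Notation sig q := (q \mPo projt int P3).

Lemma P3l t : P3 (lshift m t) = (r <= t)%N.
Proof. by rewrite /P3 /= ltn_ord. Qed.
Lemma P3r t : P3 (rshift m t) = (t == r :> nat).
Proof. by rewrite /P3 /= ltnNge leq_addr /= eqn_add2l. Qed.

Lemma W3a j : (j < r)%N -> sig (T p m j) = 0.
Proof.
elim/ltn_ind: j => j ih hj.
rewrite T_sig (ghost_sig _ _ (u := lshift m)) // (ghost_sig _ _ (u := fun t => rshift m t)) //.
rewrite big1; last by move=> t ht; rewrite P3l leqNgt (leq_ltn_trans ht hj) expr0p // mulr0.
rewrite big1; last first.
  move=> t ht; rewrite P3r; case: eqP => e; last by rewrite expr0p // mulr0.
  by move: hj; rewrite -e ltnNge ht.
rewrite big1 ?addr0 ?subrr ?divz0p // => i _.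
by rewrite ih ?expr0p ?mulr0 // ?(ltn_trans _ hj).
Qed.

Lemma W3b : sig (T p m r) = @wx m (Ordinal hr) + @wy m (Ordinal hr).
Proof.
rewrite T_sig (ghost_sig _ _ (u := lshift m)) // (ghost_sig _ _ (u := fun t => rshift m t)) //.
rewrite [X in _ - X]big1 ?subr0; last by move=> i _; rewrite W3a // expr0p // mulr0.
rewrite (bigD1 (Ordinal hr)) //= big1 ?addr0; last first.
  move=> t /andP [ht hne]; rewrite P3l.
  have -> : (r <= t)%N = false.
    by apply/negbTE; rewrite -ltnNge ltn_neqAle ht andbT; move: hne; apply: contra => /eqP e; apply/eqP/val_inj.
  by rewrite expr0p // mulr0.
rewrite (bigD1 (Ordinal hr)) //= big1 ?addr0; last first.
  move=> t /andP [ht hne]; rewrite P3r.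
  have -> : (t == r :> nat) = false.
    by apply/negbTE; move: hne; apply: contra => /eqP e; apply/eqP/val_inj.
  by rewrite expr0p // mulr0.
rewrite P3l P3r leqnn eqxx subnn expn0 !expr1 -mulrDr.
by rewrite divz_exact // expn_gt0 hp.
Qed.
End W3.


Section W1.
Variables (p m r : nat) (hp : (0 < p)%N).
Definition P1 (u : 'I_(m + m)) := if (u < m)%N then (u <= r)%N else (r < u - m)%N.
Local Notation sig q := (q \mPo projt int P1).

Lemma P1l t : P1 (lshift m t) = (t <= r)%N.
Proof. by rewrite /P1 /= ltn_ord. Qed.
Lemma P1r t : P1 (rshift m t) = (r < t)%N.
Proof. by rewrite /P1 /= ltnNge leq_addr /= addKn. Qed.

Definition z1 (t : 'I_m) := if (t <= r)%N then @wx m t else @wy m t.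

Lemma W1 (t : 'I_m) : sig (T p m t) = z1 t.
Proof.
move: {2}(val t) (erefl (val t)) => j; elim/ltn_ind: j t => j ih t ht.
rewrite T_sig (ghost_sig _ _ (u := lshift m)) // (ghost_sig _ _ (u := fun t => rshift m t)) //.
rewrite -big_split /=.
rewrite (eq_bigr (fun s : 'I_m => (p ^ s)%:R * (z1 s) ^+ (p ^ (t - s)))); last first.
  move=> s _; rewrite P1l P1r /z1 ltnNge; case: (s <= r)%N => /=.
    by rewrite expr0p // mulr0 addr0.
  by rewrite expr0p // mulr0 add0r.
have hjm : (t <= m)%N by rewrite ltnW.
rewrite (big_ord_widen _ (fun i => (p ^ i)%:R * (sig (T p m i)) ^+ (p ^ (t - i))) hjm).
rewrite [X in _ - X](eq_bigr (fun s : 'I_m => (p ^ s)%:R * (z1 s) ^+ (p ^ (t - s)))); last first.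
  by move=> s hs; rewrite (ih s) // -ht.
rewrite (bigD1 t) /=; last by [].
rewrite (eq_bigl (fun s : 'I_m => (s < t)%N)); last first.
  by move=> s /=; rewrite ltn_neqAle andbC.
by rewrite addrK subnn expn0 expr1 divz_exact // expn_gt0 hp.
Qed.
End W1.


Section E.
Variable R : comRingType.
Variables (m l r N : nat) (hr : (r < m)%N).

Definition pt (Z : {mpoly R[l]}) : m.-tuple {mpoly R[l]} :=
  [tuple (if (val t == r) then Z else 0) | t < m].

Lemma mono_r j : mono_pow m r j (Ordinal hr) = j.
Proof. by rewrite /mono_pow mnmE /= eqxx. Qed.

Lemma compX_pt Z (mu : 'X_{1..m}) :
  'X_[mu] \mPo pt Z = if mu == mono_pow m r (mu (Ordinal hr)) then Z ^+ (mu (Ordinal hr)) else 0.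
Proof.
rewrite comp_mpolyX (bigD1 (Ordinal hr)) //= tnth_map tnth_ord_tuple /= eqxx.
case: eqP => [e|ne].
  rewrite big1 ?mulr1 // => t ht; rewrite tnth_map tnth_ord_tuple.
  have htr : (val t == r) = false.
    by apply/negbTE; move: ht; apply: contra => /eqP h; apply/eqP/val_inj.
  by rewrite htr e /mono_pow mnmE htr expr0.
have [t /andP [ht hmt]] : exists t, (t != Ordinal hr) && (mu t != 0%N).
  apply/existsP; apply: contraT; rewrite negb_exists => /forallP h; case: ne.
  apply/mnmP => t; rewrite /mono_pow mnmE; case: eqP => [e|e].
    by congr (mu _); apply: val_inj.
  have := h t; rewrite negb_and negbK; case/orP => [/eqP h1|]; first by case: e; rewrite h1.
  by rewrite negbK => /eqP.
rewrite (bigD1 t) //= tnth_map tnth_ord_tuple.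
have htr : (val t == r) = false.
  by apply/negbTE; move: ht; apply: contra => /eqP h; apply/eqP/val_inj.
by rewrite htr expr0n (negbTE hmt) mul0r mulr0.
Qed.

Lemma comp_pt (q : {mpoly R[m]}) Z : trunc N q = q ->
  q \mPo pt Z = \sum_(j < N) q@_(mono_pow m r j) *: Z ^+ j.
Proof.
move=> hq; rewrite comp_mpolyEX.
under [RHS]eq_bigr => j _ do rewrite (mcoeff_sum_msupp q) scaler_suml.
rewrite exchange_big /=; apply: eq_big_seq => mu hmu.
rewrite compX_pt.
have hb : bnd N mu.
  apply: contraT => hb; move: hmu; rewrite mcoeff_msupp -hq mcoeff_trunc.
  by rewrite (negbTE hb) eqxx.
case: eqP => [e|ne].
  have hlt : (mu (Ordinal hr) < N)%N by move/forallP: hb.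
  rewrite (bigD1 (Ordinal hlt)) //= big1 ?addr0.
    by rewrite -e eqxx mulr1.
  move=> j hj; have -> : (mu == mono_pow m r j) = false.
    apply/negbTE; apply: contra hj => /eqP e'; apply/eqP/val_inj => /=.
    by rewrite e' mono_r.
  by rewrite mulr0 scale0r.
rewrite scaler0 big1 // => j _; have -> : (mu == mono_pow m r j) = false.
  apply/negbTE/negP => /eqP e'; apply: ne; by rewrite {2}e' mono_r.
by rewrite mulr0 scale0r.
Qed.
End E.


Section C.
Variable R : comRingType.
Variable l : nat.

Lemma mcoeffMX_gen (q : {mpoly R[l]}) m0 mu :
  (q * 'X_[m0])@_mu = if (m0 <= mu)%MM then q@_(mu - m0)%MM else 0.
Proof.
case: ifP => h.
  by rewrite -{1}(submK h) addmC mcoeffMX.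
apply: memN_msupp_eq0; rewrite (perm_mem (msuppMX _ _)).
apply/mapP => [[m' _ e]]; move: h; rewrite e.
by move/negP; apply; apply/mnm_lepP => t; rewrite mnmDE leq_addr.
Qed.

Lemma mcoeff_binom (u1 u2 : 'I_l) (mu : 'X_{1..l}) j J :
  u1 != u2 -> (j <= J)%N -> mu u2 = J ->
  (('X_u1 + 'X_u2 : {mpoly R[l]}) ^+ j)@_mu = ((j == J) && (mu == U_(u2) *+ J)%MM)%:R.
Proof.
move=> hu hj hmu; rewrite exprDn raddf_sum /=.
have hterm (i : 'I_j.+1) : ((('X_u1 : {mpoly R[l]}) ^+ (j - i) * 'X_u2 ^+ i) *+ 'C(j, i))@_mu
   = ((i == J :> nat) && (mu == U_(u2) *+ J)%MM)%:R *+ 'C(j, i).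
  rewrite mcoeffMn !mpolyXn -mpolyXD mcoeffX; congr (_ *+ _).
  case: (eqVneq (i : nat) J) => [hi|hi].
    have hjJ : j = J by apply/eqP; rewrite eqn_leq hj -hi -ltnS ltn_ord.
    by rewrite /= hi hjJ subnn mulm0n add0m eq_sym.
  case: eqP => // e; move: hi; rewrite -hmu -e mnmDE !mulmnE !mnm1E (negbTE hu) eqxx /=.
  by rewrite mul0n mul1n eqxx.
under eq_bigr => i _ do rewrite hterm.
case: (eqVneq j J) => [hjJ|hjJ].
  subst j; rewrite (bigD1 ord_max) //= eqxx big1 ?addr0 ?binn ?mulr1n //.
  move=> i hi; have -> : (i == J :> nat) = false.
    by apply/negbTE; move: hi; apply: contra => /eqP e; apply/eqP/val_inj.
  by rewrite mul0rn.
rewrite big1 // => i _; have -> : (i == J :> nat) = false.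
  apply/negbTE; apply: contra hjJ => /eqP e; rewrite eqn_leq hj -e -ltnS ltn_ord.
  by [].
by rewrite mul0rn.
Qed.
End C.


Section Co.
Variables (k : fieldType) (p n m d : nat) (C : 'M[{mpoly k[m]}]_d).
Hypothesis hC : is_comodule p n C.

Lemma coactionE (w : 'rV[k]_d) b : coaction C w 0 b = \sum_a w 0 a *: C a b.
Proof.
rewrite /coaction !mxE; apply: eq_bigr => a _; by rewrite mxE mul_mpolyC.
Qed.

Lemma trunc_coaction (w : 'rV[k]_d) b : trunc (p ^ n) (coaction C w 0 b) = coaction C w 0 b.
Proof.
case: hC => h1 _ _; rewrite coactionE trunc_sum; apply: eq_bigr => a _.
by rewrite truncZ h1.
Qed.

Lemma coassoc_w (w : 'rV[k]_d) b :
  trunc (p ^ n) (Delta p (coaction C w 0 b))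
  = trunc (p ^ n) (\sum_c inl_mp (C c b) * inr_mp (coaction C w 0 c)).
Proof.
case: hC => _ _ h3; rewrite coactionE /Delta linear_sum trunc_sum.
under eq_bigr => a _ do rewrite linearZ /= truncZ h3.
under eq_bigr => a _ do rewrite -truncZ.
rewrite -trunc_sum; congr trunc.
under [RHS]eq_bigr => c _ do rewrite coactionE /inr_mp linear_sum mulr_sumr.
rewrite exchange_big /=; apply: eq_bigr => a _.
rewrite scaler_sumr; apply: eq_bigr => c _.
by rewrite linearZ /= scalerAr.
Qed.

Lemma meval0c (q : {mpoly k[m]}) : q.@[fun _ => 0] = q@_0%MM.
Proof.
rewrite mevalE (mcoeff_sum_msupp q 0%MM); apply: eq_bigr => mu _; congr (_ * _).
case: eqP => [->|ne]; first by rewrite big1 // => t _; rewrite mnm0E expr0.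
have [t ht] : exists t, mu t != 0%N.
  apply/existsP; apply: contraT; rewrite negb_exists => /forallP h; case: ne.
  by apply/mnmP => t; rewrite mnm0E; move: (h t); rewrite negbK => /eqP.
by rewrite (bigD1 t) //= expr0n (negbTE ht) mul0r.
Qed.

Lemma counit_coaction (w : 'rV[k]_d) b : (coaction C w 0 b)@_0%MM = w 0 b.
Proof.
case: hC => _ h2 _; rewrite coactionE raddf_sum /=.
rewrite (bigD1 b) //= big1 ?addr0.
  by rewrite mcoeffZ -meval0c; have := h2 b b; rewrite /counit => ->; rewrite eqxx mulr1.
move=> a hab; rewrite mcoeffZ -meval0c; have := h2 a b; rewrite /counit => ->.
by rewrite (negbTE hab) mulr0.
Qed.
End Co.


Lemma split_l m n (t : 'I_m) : split (lshift n t) = inl t.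
Proof. exact: (unsplitK (inl t)). Qed.
Lemma split_r m n (t : 'I_n) : split (rshift m t) = inr t.
Proof. exact: (unsplitK (inr t)). Qed.

Lemma int_toX (R : ringType) l (u : 'I_l) : int_to R ('X_u) = 'X_u.
Proof.
apply/mpolyP => mu; rewrite mcoeff_int_to !mcoeffX.
by case: eqP.
Qed.

Lemma int_to_add (R : ringType) l (q1 q2 : {mpoly int[l]}) :
  int_to R (q1 + q2) = int_to R q1 + int_to R q2.
Proof. by apply/mpolyP => mu; rewrite mcoeffD !mcoeff_int_to mcoeffD intrD. Qed.

Lemma int_to0 (R : ringType) l : int_to R (0 : {mpoly int[l]}) = 0.
Proof. by apply/mpolyP => mu; rewrite mcoeff_int_to !mcoeff0. Qed.

Section Main.
Variables (k : fieldType) (p n m d : nat) (C : 'M[{mpoly k[m]}]_d).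
Hypothesis hC : is_comodule p n C.
Hypothesis hp : prime p.
Variables (i : nat) (hi : (1 <= i <= m)%N).
Variable v : 'rV[k]_d.
Hypothesis hv : fixed_by p n C (i - 1) v.

Local Notation N := (p ^ n)%N.
Local Notation r := (m - i)%N.
Local Notation f c := (coaction C v 0 c).

Lemma hN : (0 < N)%N. Proof. by rewrite expn_gt0 prime_gt0. Qed.
Lemma hr : (r < m)%N.
Proof. by case/andP: hi => h1 h2; rewrite ltn_subLR // -addn1 addnC leq_add2r. Qed.

Definition rho : (m + m).-tuple {mpoly k[m]} :=
  [tuple (match split u with inl t => 'X_t | inr t => 'X_t end) | u < m + m].

Definition g1 (t : 'I_m) : 'I_(m + m) := if (t <= r)%N then lshift m t else rshift m t.

Lemma g1_inj : {in predT &, injective g1}.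
Proof.
move=> s t _ _; rewrite /g1.
case: ifP => hs; case: ifP => ht.
- exact: lshift_inj.
- by move/(congr1 val) => /= e; have := ltn_ord s; rewrite e ltnNge leq_addr.
- by move/(congr1 val) => /= e; have := ltn_ord t; rewrite -e ltnNge leq_addr.
- exact: rshift_inj.
Qed.

Lemma projG_ren j (q : {mpoly k[m]}) :
  proj_G j q = q \mPo ren_tuple k (fun t : 'I_m => ~~ (t < m - j)%N) id.
Proof.
rewrite /proj_G; congr comp_mpoly; apply: eq_from_tnth => t.
by rewrite !tnth_map !tnth_ord_tuple; case: ifP.
Qed.

Lemma hfix c : proj_G (i - 1) (f c) = (v 0 c)%:MP.
Proof.
have := hv c; rewrite projG_ren trunc_ren ?hN //.
  by rewrite trunc_coaction.
Qed.

Lemma part1 b : f b \mPo projt k (fun t : 'I_m => (t <= r)%N) = f b.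
Proof.
pose s1 := projt k (@P1 m r).
have hA : Delta p (f b) \mPo s1 = f b \mPo ren_tuple k predT g1.
  rewrite /Delta comp_mpolyA; congr comp_mpoly; apply: eq_from_tnth => t.
  rewrite !tnth_map !tnth_ord_tuple int_to_proj witt_addE W1 ?prime_gt0 // /z1 /g1.
  by case: ifP => _; rewrite int_toX.
have hB : (\sum_c inl_mp (C c b) * inr_mp (f c)) \mPo s1
          = f b \mPo ren_tuple k (fun t : 'I_m => (t <= r)%N) (lshift m).
  rewrite rmorph_sum /=.
  under eq_bigr => c _.
    rewrite rmorphM /=.
    have -> : inr_mp (f c) \mPo s1 = (v 0 c)%:MP.
      rewrite -(comp_mpolyC _ [tuple ('X_(rshift m t) : {mpoly k[m + m]}) | t < m]) -hfix.
      rewrite /inr_mp !comp_mpolyA /proj_G; congr comp_mpoly.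
      apply: eq_from_tnth => t; rewrite !tnth_map !tnth_ord_tuple projX P1r.
      have -> : (t < m - (i - 1))%N = ~~ (r < t)%N.
        rewrite -leqNgt subnBA; last by case/andP: hi.
        by rewrite addnC -addnBA ?add1n ?ltnS //; case/andP: hi.
      by case: ifP => _ /=; rewrite ?comp_mpoly0 // comp_mpolyXU -tnth_nth tnth_map tnth_ord_tuple.
    rewrite mulrC mul_mpolyC.
  over.
  rewrite coactionE /inl_mp linear_sum; apply: eq_bigr => c _.
  rewrite linearZ /=; congr (_ *: _).
  rewrite comp_mpolyA; congr comp_mpoly; apply: eq_from_tnth => t.
  by rewrite !tnth_map !tnth_ord_tuple projX P1l.
have hC3 := congr1 (comp_mpoly s1) (coassoc_w hC v b).
rewrite /s1 -!trunc_ren ?hN // in hC3; try by move=> ? ? ? ? /=.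
rewrite -/s1 hA hB !trunc_ren ?hN ?trunc_coaction // in hC3; first last.
- exact: g1_inj.
- by move=> ? ? _ _; apply: lshift_inj.
have := congr1 (comp_mpoly rho) hC3; rewrite !comp_mpolyA.
have e1 : [tuple tnth (ren_tuple k predT g1) t \mPo rho | t < m] = [tuple 'X_t | t < m].
  apply: eq_from_tnth => t; rewrite !tnth_map !tnth_ord_tuple /g1 /=.
  by case: ifP => _; rewrite comp_mpolyXU -tnth_nth tnth_map tnth_ord_tuple ?split_l ?split_r.
have e2 : [tuple tnth (ren_tuple k (fun t : 'I_m => (t <= r)%N) (lshift m)) t \mPo rho | t < m]
   = projt k (fun t : 'I_m => (t <= r)%N).
  apply: eq_from_tnth => t; rewrite !tnth_map !tnth_ord_tuple /=.
  case: ifP => _; last by rewrite comp_mpoly0.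
  by rewrite comp_mpolyXU -tnth_nth tnth_map tnth_ord_tuple split_l.
by rewrite e1 e2 comp_mpoly_id => h; exact: (esym h).
Qed.
End Main.


Lemma lr_neq m (a b : 'I_m) : (lshift m a == rshift m b) = false.
Proof.
apply/negbTE/negP => /eqP /(congr1 val) /= e.
by have := ltn_ord a; rewrite e ltnNge leq_addr.
Qed.

Section Main3.
Variables (k : fieldType) (p n m d : nat) (C : 'M[{mpoly k[m]}]_d).
Hypothesis hC : is_comodule p n C.
Hypothesis hp : prime p.
Variables (i : nat) (hi : (1 <= i <= m)%N).
Variable v : 'rV[k]_d.
Hypothesis hv : fixed_by p n C (i - 1) v.

Local Notation N := (p ^ n)%N.
Local Notation r := (m - i)%N.
Local Notation f c := (coaction C v 0 c).

Let hr := hr hi.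
Let ro := Ordinal hr.
Let Xl := lshift m ro.
Let Y := rshift m ro.
Let s3 := projt k (@P3 m r).

Lemma hL b : Delta p (f b) \mPo s3 = f b \mPo pt m r ('X_Xl + 'X_Y).
Proof.
rewrite -{1}(part1 hC hp hi hv b) /Delta !comp_mpolyA; congr comp_mpoly.
apply: eq_from_tnth => t; rewrite !tnth_map !tnth_ord_tuple /=.
case: ltngtP => htr.
- rewrite comp_mpolyXU -tnth_nth !tnth_map !tnth_ord_tuple.
  by rewrite /s3 int_to_proj witt_addE W3a ?prime_gt0 // int_to0.
- by rewrite !comp_mpoly0.
- rewrite comp_mpolyXU -tnth_nth !tnth_map !tnth_ord_tuple.
  have -> : t = ro by apply: val_inj.
  by rewrite /s3 int_to_proj witt_addE W3b ?prime_gt0 // int_to_add !int_toX.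
Qed.

Definition Qj b j := proj_G i (coaction C (coef_row C v (mono_pow m r j)) 0 b).

Lemma hR b : (\sum_c inl_mp (C c b) * inr_mp (f c)) \mPo s3
  = \sum_(j < N) inl_mp (Qj b j) * 'X_Y ^+ j.
Proof.
rewrite rmorph_sum /=.
under eq_bigr => c _.
  rewrite rmorphM /=.
  have -> : inr_mp (f c) \mPo s3 = f c \mPo pt m r ('X_Y).
    rewrite /inr_mp comp_mpolyA; congr comp_mpoly; apply: eq_from_tnth => t.
    rewrite !tnth_map !tnth_ord_tuple projX P3r; case: eqP => // e.
    by congr 'X_(_); apply: val_inj; rewrite /= e.
  rewrite (comp_pt hr _ (trunc_coaction hC v c)).
  have -> : inl_mp (C c b) \mPo s3 = inl_mp (proj_G i (C c b)).
    rewrite /inl_mp /proj_G !comp_mpolyA; congr comp_mpoly; apply: eq_from_tnth => t.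
    rewrite !tnth_map !tnth_ord_tuple projX P3l.
    by case: ltnP => _ /=; rewrite ?comp_mpoly0 // comp_mpolyXU -tnth_nth tnth_map tnth_ord_tuple.
  rewrite mulr_sumr.
over.
rewrite /= exchange_big /=; apply: eq_bigr => j _.
rewrite /Qj coactionE /proj_G linear_sum /inl_mp linear_sum mulr_suml /=.
apply: eq_bigr => c _.
rewrite !linearZ /= -scalerAl -scalerAr; congr (_ *: _).
by rewrite /coef_row [RHS]mxE.
Qed.

Lemma coef_rowE mu c : coef_row C v mu 0 c = (f c)@_mu.
Proof. by rewrite /coef_row mxE. Qed.

Lemma part3 J : coef_row C v (mono_pow m r J) != 0 ->
  (forall j', (J < j')%N -> coef_row C v (mono_pow m r j') = 0) ->
  fixed_by p n C i (coef_row C v (mono_pow m r J)).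
Proof.
move=> hw hmax b.
have hJN : (J < N)%N.
  rewrite ltnNge; apply/negP => hNJ; case/negP: hw; apply/eqP/rowP => c.
  rewrite coef_rowE [RHS]mxE -(trunc_coaction hC v c) mcoeff_trunc.
  have -> : bnd N (mono_pow m r J) = false.
    by apply/negbTE/negP; rewrite /bnd => /forallP /(_ ro); rewrite mono_r ltnNge hNJ.
  by [].
have hQt : trunc N (Qj b J) = Qj b J.
  by rewrite /Qj projG_ren trunc_ren ?hN // trunc_coaction.
change (trunc N (Qj b J) = (coef_row C v (mono_pow m r J) 0 b)%:MP).
rewrite hQt coef_rowE.
have key := congr1 (comp_mpoly s3) (coassoc_w hC v b).
rewrite /s3 -!trunc_ren ?hN // -/s3 hL hR in key.
rewrite (comp_pt hr _ (trunc_coaction hC v b)) in key.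
apply/mpolyP => nu.
case hb: (bnd N nu); last first.
  rewrite -hQt mcoeff_trunc hb mcoeffC.
  have -> : (nu == 0%MM) = false.
    apply/negbTE/negP => /eqP e; move: hb; rewrite e.
    by have -> : bnd N (0%MM : 'X_{1..m}) by rewrite /bnd; apply/forallP => t; rewrite mnm0E hN.
  by rewrite mulr0.
set mu' := (push (fun t : 'I_m => lshift m t) nu + U_(Y) *+ J)%MM.
have hpush_l t : push (fun t : 'I_m => lshift m t) nu (lshift m t) = nu t.
  have hps : psupp predT nu by apply/forallP => x; rewrite implybT.
  have := congr1 (fun x : 'X_{1..m} => x t) (pull_push (fun a b _ _ => @lshift_inj m m a b) hps).
  by rewrite mnmE.
have hpush_r t : push (fun t : 'I_m => lshift m t) nu (rshift m t) = 0%N.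
  by rewrite pushE big1 // => s _; rewrite lr_neq.
have hmuY : mu' Y = J by rewrite mnmDE hpush_r mulmnE mnm1E eqxx mul1n.
have hmul t : mu' (lshift m t) = nu t.
  by rewrite mnmDE hpush_l mulmnE mnm1E /Y eq_sym lr_neq mul0n addn0.
have hbm : bnd N mu'.
  rewrite /bnd; apply/forallP => u; rewrite -(splitK u); case: (split u) => t /=.
    by rewrite hmul; move: hb; rewrite /bnd => /forallP.
  rewrite mnmDE hpush_r mulmnE mnm1E add0n.
  by case: (Y == rshift m t); rewrite ?mul1n ?mul0n ?hN.
have h := congr1 (mcoeff mu') key; rewrite !mcoeff_trunc hbm !raddf_sum /= in h.
have hXY : Xl != Y by rewrite /Xl /Y lr_neq.
have heq0 : (mu' == U_(Y) *+ J)%MM = (nu == 0%MM).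
  apply/eqP/eqP => [e|e].
    apply/mnmP => t; rewrite mnm0E -hmul e mulmnE mnm1E /Y eq_sym lr_neq.
    by rewrite mul0n.
  apply/mnmP => u; rewrite -(splitK u); case: (split u) => t /=.
    by rewrite hmul e mnm0E mulmnE mnm1E /Y eq_sym lr_neq mul0n.
  by rewrite mnmDE hpush_r add0n.
have hinl j : inl_mp (Qj b j) = Qj b j \mPo ren_tuple k predT (fun t : 'I_m => lshift m t).
  by [].
have hinj : {in predT &, injective (fun t : 'I_m => lshift m t)}.
  by move=> x y _ _; apply: lshift_inj.
have hLHS : \sum_(j < N) ((f b)@_(mono_pow m r j) *: ('X_Xl + 'X_Y) ^+ j)@_mu'
    = (f b)@_(mono_pow m r J) * (nu == 0%MM)%:R.
  rewrite (bigD1 (Ordinal hJN)) //= big1 ?addr0.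
    by rewrite mcoeffZ (mcoeff_binom _ hXY (leqnn J) hmuY) eqxx /= heq0.
  move=> j hj; rewrite mcoeffZ.
  case: (ltnP J j) => hJj.
    have e := congr1 (fun M : 'rV[k]_d => M 0 b) (hmax _ hJj).
    by rewrite /= coef_rowE [RHS]mxE in e; rewrite e mul0r.
  rewrite (mcoeff_binom _ hXY hJj hmuY).
  have -> : (j == J :> nat) = false.
    by apply/negbTE; move: hj; apply: contra => /eqP e; apply/eqP/val_inj.
  by rewrite mulr0.
have hRHS : \sum_(j < N) (inl_mp (Qj b j) * 'X_Y ^+ j)@_mu' = (Qj b J)@_nu.
  rewrite (bigD1 (Ordinal hJN)) //= big1 ?addr0.
    rewrite mpolyXn mcoeffMX_gen.
    have -> : (U_(Y) *+ J <= mu')%MM by rewrite /mu' addmC lem_addr.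
    rewrite /mu' addmK hinl mcoeff_ren // imsupp_push // ?pull_push //;
      by apply/forallP => x; rewrite implybT.
  move=> j hj; rewrite mpolyXn mcoeffMX_gen.
  case: ifP => // hle.
  case: (ltnP J j) => hJj.
    move/mnm_lepP: hle => /(_ Y); rewrite mulmnE mnm1E eqxx mul1n hmuY.
    by rewrite leqNgt hJj.
  have hjJ : (j < J)%N.
    rewrite ltn_neqAle hJj andbT; move: hj; apply: contra => /eqP e.
    by apply/eqP/val_inj.
  rewrite hinl mcoeff_ren //.
  have -> : imsupp predT (fun t : 'I_m => lshift m t) (mu' - U_(Y) *+ j)%MM = false.
    apply/negbTE/negP => /forallP /(_ Y).
    rewrite mnmBE hmuY mulmnE mnm1E eqxx mul1n subn_eq0 leqNgt hjJ /=.
    by case/existsP => t; rewrite /Y lr_neq.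
  by [].
by rewrite mcoeffC -hRHS -h hLHS.
Qed.

End Main3.


End Helpers.
Import Helpers.
Unset Implicit Arguments. Set Strict Implicit. Set Printing Implicit Defensive.

Theorem mainTheorem10 (k : fieldType) (p n m : nat)
  (hp : prime p) (hchar : p \in [pchar k]) (hn : (1 <= n)%N) (hm : (1 <= m)%N)
  (d : nat) (C : 'M[{mpoly k[m]}]_d) (hC : is_comodule p n C)
  (i : nat) (hi : (1 <= i <= m)%N)
  (v : 'rV[k]_d) (hv : fixed_by p n C (i - 1) v) (hv0 : v != 0) :
  (forall b, in_sub_vars (m - i) (coaction C v 0 b))
  /\ (exists j : nat, coef_row C v (mono_pow m (m - i) j) != 0
        /\ forall j', (j < j')%N -> coef_row C v (mono_pow m (m - i) j') = 0)
  /\ (forall j : nat, coef_row C v (mono_pow m (m - i) j) != 0 ->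
        (forall j', (j < j')%N -> coef_row C v (mono_pow m (m - i) j') = 0) ->
        fixed_by p n C i (coef_row C v (mono_pow m (m - i) j))
        /\ coef_row C v (mono_pow m (m - i) j) != 0).
Proof.
split; first by move=> b; exact: (part1 hC hp hi hv b).
split; last by move=> j hj hmax; split => //; exact: (part3 hC hp hi hv hj hmax).
pose P := fun j => coef_row C v (mono_pow m (m - i) j) != 0.
have hP0 : exists j, P j.
  exists 0%N; rewrite /P.
  have -> : coef_row C v (mono_pow m (m - i) 0) = v.
    apply/rowP => b; rewrite /coef_row mxE.
    have -> : mono_pow m (m - i) 0 = 0%MM.
      by apply/mnmP => t; rewrite /mono_pow mnmE mnm0E; case: ifP.
    by rewrite (counit_coaction hC) .
  exact: hv0.
have hPb : forall j, P j -> (j <= (p ^ n).-1)%N.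
  move=> j hj; rewrite -ltnS prednK ?expn_gt0 ?prime_gt0 //.
  apply: contraT; rewrite -leqNgt => hNJ; move: hj; rewrite /P => /negP h0; case: h0.
  apply/eqP/rowP => c; rewrite /coef_row [RHS]mxE mxE -(trunc_coaction hC v c) mcoeff_trunc.
  have hr := hr hi.
  have -> : bnd (p ^ n) (mono_pow m (m - i) j) = false.
    by apply/negbTE/negP; rewrite /bnd => /forallP /(_ (Ordinal hr)); rewrite mono_r ltnNge hNJ.
  by [].
case: (ex_maxnP hP0 hPb) => J hJ hmaxJ.
exists J; split => // j' hj'.
apply/eqP; apply: contraT => hne.
by have := hmaxJ _ hne; rewrite leqNgt hj'.
Qed.
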